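(* Let $G$ be a Lie group, $H\subseteq G$ a closed subgroup, and $\mathfrak{g}=\mathfrak{h}\oplus\mathfrak{m}$ a reductive decomposition. Equip $G/H$ with a $G$-invariant Riemannian metric (an $\mathrm{Ad}(H)$-invariant inner product $\langle\cdot,\cdot\rangle$ on $\mathfrak{m}$) with Levi-Civita connection $\nabla$. If $G/H$ admits a $G$-invariant essential Codazzi tensor field $A$, then the non-associative algebra $(\mathfrak{m},[\cdot,\cdot]_{\mathfrak{m}})$ is neither nilpotent nor split-solvable.
   Context: A reductive decomposition means $\mathfrak{m}$ is an $\mathrm{Ad}(H)$-invariant vector space complement of $\mathfrak{h}$ in $\mathfrak{g}$; $[X,Y]_{\mathfrak{m}}$ is the $\mathfrak{m}$-component of $[X,Y]$ in $\mathfrak{g}=\mathfrak{h}\oplus\mathfrak{m}$. $G$-invariant tensor fields on $G/H$ correspond to $\mathrm{Ad}(H)$-invariant tensors on $\mathfrak{m}\cong T_{eH}(G/H)$. A Codazzi tensor field is a symmetric twice-covariant tensor field $A$ with $(\nabla_XA)(Y,Z)=(\nabla_YA)(X,Z)$ for all vector fields $X,Y,Z$. A $G$-invariant Codazzi tensor field $A$ is called essential if $\nabla A\neq 0$ and none of the eigenspaces $\mathfrak{m}_i$ of $A$ on $\mathfrak{m}$ (relative to $\langle\cdot,\cdot\rangle$) is an ideal of $(\mathfrak{m},[\cdot,\cdot]_{\mathfrak{m}})$. A non-associative algebra $\mathfrak{a}$ is nilpotent if there is a positive integer $t$ such that every product of $t$ elements of $\mathfrak{a}$, however associated, is zero; it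 is split-solvable if there is a chain $\mathfrak{a}=\mathfrak{a}_0\supseteq\cdots\supseteq\mathfrak{a}_p=0$ of ideals of $\mathfrak{a}$ with $\dim(\mathfrak{a}_i/\mathfrak{a}_{i+1})=1$ for all $i$. *)

(* Defs.v *)
(* Purely algebraic (infinitesimal) model of a reductive
   homogeneous space G/H with an invariant metric. *)
From HB Require Import structures.
From mathcomp Require Import all_boot all_order all_algebra.
From mathcomp Require Import reals.
Set Implicit Arguments. Unset Strict Implicit. Unset Printing Implicit Defensive.
Import Order.TTheory GRing.Theory Num.Theory.
Local Open Scope ring_scope.

Section Defs.
Variables (R : realType) (V : vectType R).

Definition lie_bracket (br : V -> V -> V) : Prop :=
  [/\ forall (a : R) x y z, br (a *: x + y) z = a *: br x z + br y z,
      forall (a : R) x y z, br x (a *: y + z) = a *: br x y + br x z,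
      forall x, br x x = 0
    & forall x y z, br x (br y z) + br y (br z x) + br z (br x y) = 0].

Definition reductive_decomposition (br : V -> V -> V) (h m : {vspace V}) :=
  [/\ (h + m = fullv)%VS, (h :&: m = 0)%VS,
      (forall u v, u \in h -> v \in h -> br u v \in h)
    & (forall u x, u \in h -> x \in m -> br u x \in m)].

Definition mpart (h m : {vspace V}) (v : V) : V := daddv_pi m h v.

Definition brm (br : V -> V -> V) (h m : {vspace V}) (x y : V) : V :=
  mpart h m (br x y).

(* a real bilinear form (on g; only its restriction to m matters) *)
Definition bilinear_form (B : V -> V -> R) : Prop :=
  (forall (a : R) x y z, B (a *: x + y) z = a * B x z + B y z) /\
  (forall (a : R) x y z, B x (a *: y + z) = a * B x y + B x z).

Definition symmetric_on (m : {vspace V}) (B : V -> V -> R) : Prop :=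
  forall x y, x \in m -> y \in m -> B x y = B y x.

Definition ad_h_invariant (br : V -> V -> V) (h m : {vspace V})
  (B : V -> V -> R) : Prop :=
  forall u x y, u \in h -> x \in m -> y \in m ->
    B (br u x) y + B x (br u y) = 0.

Definition inner_product_on (m : {vspace V}) (ip : V -> V -> R) : Prop :=
  [/\ bilinear_form ip, symmetric_on m ip
    & forall x, x \in m -> x != 0 -> 0 < ip x x].

(* Lam X Y (X, Y in m) is the Levi-Civita connection of the invariant metric
   at the origin eH (Nomizu operator Lambda(X)Y = 1/2 [X,Y]_m + U(X,Y)),
   characterised through the inner product. *)
Definition levi_civita (br : V -> V -> V) (h m : {vspace V})
  (ip : V -> V -> R) (Lam : V -> V -> V) : Prop :=
  forall x y, x \in m -> y \in m ->
    Lam x y \in m /\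
    forall z, z \in m ->
      ip (Lam x y) z =
        2^-1 * ip (brm br h m x y) z
        + 2^-1 * (ip (brm br h m z x) y + ip x (brm br h m z y)).

(* (nabla_X A)(Y,Z) at the origin, for the G-invariant tensor field A *)
Definition nablaA (Lam : V -> V -> V) (A : V -> V -> R) (x y z : V) : R :=
  - A (Lam x y) z - A y (Lam x z).

Definition codazzi (m : {vspace V}) (Lam : V -> V -> V) (A : V -> V -> R) :=
  forall x y z, x \in m -> y \in m -> z \in m ->
    nablaA Lam A x y z = nablaA Lam A y x z.

Definition eigenspace_rel (m : {vspace V}) (ip A : V -> V -> R) (l : R)
  (x : V) : Prop :=
  x \in m /\ forall y, y \in m -> A x y = l * ip x y.

Definition alg_ideal (m : {vspace V}) (mul : V -> V -> V) (I : V -> Prop) :=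
  [/\ forall x, I x -> x \in m,
      I 0,
      forall (a : R) x y, I x -> I y -> I (a *: x + y)
    & forall x y, x \in m -> I y -> I (mul x y) /\ I (mul y x)].

Definition essential (m : {vspace V}) (mul : V -> V -> V)
  (ip : V -> V -> R) (Lam : V -> V -> V) (A : V -> V -> R) : Prop :=
  (exists x y z, [/\ x \in m, y \in m, z \in m & nablaA Lam A x y z != 0])
  /\ forall l : R, (exists x, eigenspace_rel m ip A l x /\ x != 0) ->
       ~ alg_ideal m mul (eigenspace_rel m ip A l).

Inductive is_product (m : {vspace V}) (mul : V -> V -> V) : nat -> V -> Prop :=
  | prod_one x : x \in m -> is_product m mul 1 x
  | prod_mul i j x y : is_product m mul i x -> is_product m mul j y ->
      is_product m mul (i + j) (mul x y).

Definition nilpotent_alg (m : {vspace V}) (mul : V -> V -> V) : Prop :=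
  exists t : nat, (0 < t)%N /\ forall x, is_product m mul t x -> x = 0.

Definition split_solvable_alg (m : {vspace V}) (mul : V -> V -> V) : Prop :=
  exists (p : nat) (a : nat -> {vspace V}),
    [/\ a 0%N = m, a p = 0%VS,
        forall i, (i < p)%N ->
          (a i.+1 <= a i)%VS /\ \dim (a i) = (\dim (a i.+1)).+1
      & forall i, (i <= p)%N -> alg_ideal m mul (fun x => x \in a i)].

End Defs.

(* Main.v *)
Require Import Defs.
From HB Require Import structures.
From mathcomp Require Import all_boot all_order all_algebra.
From mathcomp Require Import reals.
Import Order.TTheory GRing.Theory Num.Theory.
Local Open Scope ring_scope.

From mathcomp Require Import complex.
From mathcomp Require Import zify ring.

Module ProofAux.
Set Implicit Arguments. Unset Strict Implicit. Unset Printing Implicit Defensive.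

Section Lin.
Variables (R : realType) (V : vectType R).

Lemma lin0 (f : V -> R) :
  (forall (a : R) x y, f (a *: x + y) = a * f x + f y) -> f 0 = 0.
Proof.
move=> hf; have := hf 1 0 0; rewrite scaler0 addr0 mul1r => h.
by apply: (addrI (f 0)); rewrite addr0 -h.
Qed.

Lemma linD (f : V -> R) :
  (forall (a : R) x y, f (a *: x + y) = a * f x + f y) ->
  forall x y, f (x + y) = f x + f y.
Proof. by move=> hf x y; rewrite -(scale1r x) hf mul1r scale1r. Qed.

Lemma linZ (f : V -> R) :
  (forall (a : R) x y, f (a *: x + y) = a * f x + f y) ->
  forall a x, f (a *: x) = a * f x.
Proof. by move=> hf a x; rewrite -(addr0 (a *: x)) hf (lin0 hf) addr0. Qed.

Lemma linN (f : V -> R) :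
  (forall (a : R) x y, f (a *: x + y) = a * f x + f y) ->
  forall x, f (- x) = - f x.
Proof. by move=> hf x; rewrite -scaleN1r (linZ hf) mulN1r. Qed.

Lemma linB (f : V -> R) :
  (forall (a : R) x y, f (a *: x + y) = a * f x + f y) ->
  forall x y, f (x - y) = f x - f y.
Proof. by move=> hf x y; rewrite (linD hf) (linN hf). Qed.

Lemma lin_sum (f : V -> R) :
  (forall (a : R) x y, f (a *: x + y) = a * f x + f y) ->
  forall (T : Type) (r : seq T) (P : pred T) (F : T -> V),
  f (\sum_(i <- r | P i) F i) = \sum_(i <- r | P i) f (F i).
Proof.
move=> hf T r P F; elim: r => [|i r IH]; first by rewrite !big_nil (lin0 hf).
by rewrite !big_cons; case: (P i); rewrite ?(linD hf) IH.
Qed.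

Lemma vlin0 (f : V -> V) :
  (forall (a : R) x y, f (a *: x + y) = a *: f x + f y) -> f 0 = 0.
Proof.
move=> hf; have := hf 1 0 0; rewrite scaler0 addr0 scale1r => h.
by apply: (addrI (f 0)); rewrite addr0 -h.
Qed.

Lemma vlinD (f : V -> V) :
  (forall (a : R) x y, f (a *: x + y) = a *: f x + f y) ->
  forall x y, f (x + y) = f x + f y.
Proof. by move=> hf x y; rewrite -(scale1r x) hf !scale1r. Qed.

Lemma vlinZ (f : V -> V) :
  (forall (a : R) x y, f (a *: x + y) = a *: f x + f y) ->
  forall a x, f (a *: x) = a *: f x.
Proof. by move=> hf a x; rewrite -(addr0 (a *: x)) hf (vlin0 hf) addr0. Qed.

Lemma vlin_sum (f : V -> V) :
  (forall (a : R) x y, f (a *: x + y) = a *: f x + f y) ->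
  forall (T : Type) (r : seq T) (P : pred T) (F : T -> V),
  f (\sum_(i <- r | P i) F i) = \sum_(i <- r | P i) f (F i).
Proof.
move=> hf T r P F; elim: r => [|i r IH]; first by rewrite !big_nil (vlin0 hf).
by rewrite !big_cons; case: (P i); rewrite ?(vlinD hf) IH.
Qed.

Lemma lin_end (f : V -> V) :
  (forall (a : R) x y, f (a *: x + y) = a *: f x + f y) ->
  exists F : 'End(V), forall v, F v = f v.
Proof.
move=> hf; have hl : linear f by move=> a x y; rewrite hf.
pose fl : {linear V -> V} := HB.pack f (GRing.isLinear.Build R V V *:%R f hl).
by exists (linfun fl) => v; rewrite lfunE.
Qed.

End Lin.


Section Frames.
Variables (R : realType) (V : vectType R) (m : {vspace V}) (ip : V -> V -> R).
Hypothesis Hip : inner_product_on m ip.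

Lemma ip_l : forall (a : R) x y z, ip (a *: x + y) z = a * ip x z + ip y z.
Proof. by case: Hip => [[]]. Qed.
Lemma ip_r z : forall (a : R) x y, ip z (a *: x + y) = a * ip z x + ip z y.
Proof. by case: Hip => [[]]. Qed.
Lemma ip_sym x y : x \in m -> y \in m -> ip x y = ip y x.
Proof. by case: Hip => _ hs _; apply: hs. Qed.
Lemma ip_pos x : x \in m -> x != 0 -> 0 < ip x x.
Proof. by case: Hip => _ _ hp; apply: hp. Qed.

Let hl z : forall (a : R) x y, (fun v => ip v z) (a *: x + y) = a * ip x z + ip y z.
Proof. by move=> a x y /=; rewrite ip_l. Qed.
Let hr z : forall (a : R) x y, (ip z) (a *: x + y) = a * ip z x + ip z y.
Proof. exact: ip_r. Qed.

Lemma ip_suml z (T : Type) (r : seq T) (P : pred T) (F : T -> V) :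
  ip (\sum_(i <- r | P i) F i) z = \sum_(i <- r | P i) ip (F i) z.
Proof. exact: (lin_sum (hl z)). Qed.
Lemma ip_sumr z (T : Type) (r : seq T) (P : pred T) (F : T -> V) :
  ip z (\sum_(i <- r | P i) F i) = \sum_(i <- r | P i) ip z (F i).
Proof. exact: (lin_sum (hr z)). Qed.
Lemma ip0l z : ip 0 z = 0. Proof. exact: (lin0 (hl z)). Qed.
Lemma ip0r z : ip z 0 = 0. Proof. exact: (lin0 (hr z)). Qed.
Lemma ipZl z a x : ip (a *: x) z = a * ip x z. Proof. exact: (linZ (hl z)). Qed.
Lemma ipZr z a x : ip z (a *: x) = a * ip z x. Proof. exact: (linZ (hr z)). Qed.
Lemma ipDl z x y : ip (x + y) z = ip x z + ip y z. Proof. exact: (linD (hl z)). Qed.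
Lemma ipDr z x y : ip z (x + y) = ip z x + ip z y. Proof. exact: (linD (hr z)). Qed.
Lemma ipBl z x y : ip (x - y) z = ip x z - ip y z. Proof. exact: (linB (hl z)). Qed.
Lemma ipBr z x y : ip z (x - y) = ip z x - ip z y. Proof. exact: (linB (hr z)). Qed.

Lemma ip_eq0 x : x \in m -> ip x x = 0 -> x = 0.
Proof.
move=> xm h; apply/eqP; apply/negPn/negP => nx.
by have := ip_pos xm nx; rewrite h ltxx.
Qed.

Definition expand (s : seq V) (y : V) := \sum_(x <- s) ip y x *: x.

Definition frame (W : {vspace V}) (s : seq V) :=
  (forall x, x \in s -> x \in W) /\ (forall y, y \in W -> y = expand s y).

Definition qf (Q : V -> V) (s : seq V) :=
  \sum_(x <- s) \sum_(y <- s) ip (Q x) y * ip (Q y) x.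

Definition islin (Q : V -> V) := forall (a : R) x y, Q (a *: x + y) = a *: Q x + Q y.

Lemma expand_mem (W : {vspace V}) s y : (forall x, x \in s -> x \in W) -> expand s y \in W.
Proof.
move=> hs; rewrite /expand big_seq; apply: memv_suml => x xs.
by apply: memvZ; apply: hs.
Qed.

Lemma expand_lin s a x y : expand s (a *: x + y) = a *: expand s x + expand s y.
Proof.
rewrite /expand scaler_sumr -big_split /=; apply: eq_bigr => z _.
by rewrite ip_l scalerDl scalerA.
Qed.

Lemma qf_trace (W : {vspace V}) s Q : (W <= m)%VS -> frame W s -> islin Q ->
  (forall x, x \in W -> Q x \in W) ->
  qf Q s = \sum_(x <- s) ip (Q (Q x)) x.
Proof.
move=> Wm [sW sE] Ql QW; rewrite /qf big_seq [RHS]big_seq; apply: eq_bigr => x xs.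
have QxW := QW _ (sW _ xs).
have -> : ip (Q (Q x)) x = ip (Q (expand s (Q x))) x by rewrite -(sE _ QxW).
rewrite /expand (vlin_sum Ql) ip_suml; apply: eq_bigr => y _.
by rewrite (vlinZ Ql) ipZl.
Qed.

Lemma trace_inv (W : {vspace V}) s t (N : V -> V) : (W <= m)%VS -> frame W s -> frame W t ->
  islin N ->
  \sum_(x <- s) ip (N x) x = \sum_(z <- t) ip (N z) z.
Proof.
move=> Wm [sW sE] [tW tE] Nl.
transitivity (\sum_(x <- s) \sum_(z <- t) ip x z * ip (N x) z).
  rewrite big_seq [RHS]big_seq; apply: eq_bigr => x xs.
  have -> : ip (N x) x = ip (N x) (expand t x) by rewrite -(tE _ (sW _ xs)).
  rewrite /expand ip_sumr; apply: eq_bigr => z _.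
  by rewrite ipZr.
rewrite exchange_big /= big_seq [RHS]big_seq; apply: eq_bigr => z zt.
have -> : ip (N z) z = ip (N (expand s z)) z by rewrite -(sE _ (tW _ zt)).
rewrite /expand (vlin_sum Nl) ip_suml !big_seq.
apply: eq_bigr => x xs.
have xm : x \in m by apply: (subvP Wm); apply: sW.
have zm : z \in m by apply: (subvP Wm); apply: tW.
by rewrite (vlinZ Nl) ipZl ip_sym.
Qed.

Definition gnew (s : seq V) (x0 : V) :=
  let r := x0 - expand s x0 in (Num.sqrt (ip r r))^-1 *: r.

Lemma line_disj (W : {vspace V}) x0 : x0 \notin W -> (W :&: <[x0]> = 0)%VS.
Proof.
move=> nx; apply/eqP; rewrite -subv0; apply/subvP => v /memv_capP [vW /vlineP [k vk]].
rewrite memv0; apply/eqP; move: vW; rewrite vk.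
have [->|kn0] := eqVneq k 0; first by rewrite scale0r.
move=> /(memvZ k^-1); rewrite scalerA mulVf // scale1r => x0W.
by rewrite x0W in nx.
Qed.

Lemma dim_add_line (W : {vspace V}) x0 : x0 \notin W ->
  \dim (W + <[x0]>) = (\dim W).+1.
Proof.
move=> nx; rewrite dimv_disjoint_sum ?line_disj // dim_vline.
have -> : x0 != 0 by apply: contraNneq nx => ->; rewrite mem0v.
by rewrite addn1.
Qed.

Lemma one_step (W : {vspace V}) s x0 Q : (W <= m)%VS -> frame W s -> x0 \in m -> x0 \notin W ->
  islin Q -> (forall x, x \in W -> Q x \in W) ->
  frame (W + <[x0]>)%VS (gnew s x0 :: s) /\ qf Q s <= qf Q (gnew s x0 :: s).
Proof.
move=> Wm [sW sE] x0m nx Ql QW.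
set e := expand s x0; set r := x0 - e.
have eW : e \in W by apply: expand_mem.
have rm : r \in m by rewrite memvB // (subvP Wm).
have rorth w : w \in W -> ip r w = 0.
  move=> wW; have wm : w \in m by apply: (subvP Wm).
  rewrite ipBl /e /expand ip_suml.
  have -> : ip x0 w = ip x0 (expand s w) by rewrite -(sE _ wW).
  rewrite /expand ip_sumr -sumrB big_seq big1 // => x xs.
  have xm : x \in m by apply: (subvP Wm); apply: sW.
  by rewrite ipZl ipZr (ip_sym xm wm) mulrC subrr.
have rn0 : r != 0.
  by apply: contra nx; rewrite subr_eq0 => /eqP ->.
have rpos : 0 < ip r r by apply: ip_pos.
set g := gnew s x0.
have gE : g = (Num.sqrt (ip r r))^-1 *: r by [].
have sq0 : 0 < Num.sqrt (ip r r) by rewrite sqrtr_gt0.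
have gorth w : w \in W -> ip g w = 0 by move=> wW; rewrite gE ipZl (rorth _ wW) mulr0.
have gorth' w : w \in W -> ip w g = 0.
  by move=> wW; rewrite ip_sym ?gorth //; [apply: (subvP Wm) | rewrite gE memvZ].
have x0g : ip x0 g *: g = r.
  have hx : ip x0 g = Num.sqrt (ip r r).
    have -> : x0 = r + e by rewrite /r subrK.
    rewrite ipDl (gorth' _ eW) addr0 gE ipZr -{2}(sqr_sqrtr (ltW rpos)) expr2 mulKf //.
    by rewrite gt_eqF.
  by rewrite hx gE scalerA mulfV ?scale1r // gt_eqF.
split.
  split.
    move=> x; rewrite inE => /orP [/eqP ->|xs].
      rewrite gE memvZ // memvB //; first by rewrite (subvP (addvSr _ _)) // memv_line.
      by rewrite (subvP (addvSl _ _)).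
    by rewrite (subvP (addvSl _ _)) // sW.
  move=> y /memv_addP [w wW [z /vlineP [k ->] ->]].
  have E1 : expand s (w + k *: x0) = w + k *: e.
    by rewrite addrC expand_lin -(sE _ wW) addrC.
  rewrite /expand big_cons -/(expand s _) E1 ipDl ipZl (gorth' _ wW) add0r.
  rewrite -scalerA x0g /r scalerBr.
  by rewrite addrCA subrK.
rewrite /qf big_cons.
have h1 : \sum_(x <- s) \sum_(y <- g :: s) ip (Q x) y * ip (Q y) x
        = \sum_(x <- s) \sum_(y <- s) ip (Q x) y * ip (Q y) x.
  rewrite big_seq [RHS]big_seq; apply: eq_bigr => x xs.
  by rewrite big_cons gorth' ?mul0r ?add0r // QW // sW.
have h2 : \sum_(y <- g :: s) ip (Q g) y * ip (Q y) g = ip (Q g) g * ip (Q g) g.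
  rewrite big_cons big_seq big1 ?addr0 //.
  by move=> y ys; rewrite gorth' ?mulr0 // QW // sW.
by rewrite h1 h2 lerDr -expr2 sqr_ge0.
Qed.

End Frames.


Section Chain.
Variables (R : realType) (V : vectType R) (m : {vspace V}) (ip : V -> V -> R).
Hypothesis Hip : inner_product_on m ip.

Lemma grow (W : {vspace V}) Q : (W <= m)%VS -> islin Q ->
  (forall x, x \in W -> Q x \in W) ->
  forall k (Z : {vspace V}) s, (Z <= W)%VS -> \dim W = (\dim Z + k)%N ->
  (forall x, x \in Z -> Q x \in Z) ->
  ((k <= 1)%N \/ forall x, x \in W -> Q x \in Z) ->
  frame ip Z s -> 0 <= qf ip Q s ->
  exists s', frame ip W s' /\ 0 <= qf ip Q s'.
Proof.
move=> Wm Ql QW k; elim: k => [|k IH] Z s ZW dimW QZ hk fs qs.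
  have /eqP ZeW : Z == W by rewrite eqEdim ZW dimW addn0 leqnn.
  by exists s; rewrite -ZeW.
have /subvPn [x0 x0W nx] : ~~ (W <= Z)%VS.
  apply/negP => /dimvS; rewrite dimW => h.
  by have := leq_trans h (leqnn _); rewrite -{2}(addn0 (\dim Z)) leq_add2l.
have Zm : (Z <= m)%VS by apply: subv_trans ZW Wm.
have x0m : x0 \in m by apply: (subvP Wm).
have [fr' q'] := one_step Hip Zm fs x0m nx Ql QZ.
set Z' := (Z + <[x0]>)%VS in fr'.
have Z'W : (Z' <= W)%VS by rewrite subv_add ZW -memvE.
have dimZ' : \dim Z' = (\dim Z).+1 by apply: dim_add_line.
have dimW' : \dim W = (\dim Z' + k)%N by rewrite dimZ' dimW addnS addSn.
have ZZ' : (Z <= Z')%VS by apply: addvSl.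
have QZ' : forall x, x \in Z' -> Q x \in Z'.
  have [k0|kn0] := eqVneq k 0%N.
    have /eqP ZeW : Z' == W by rewrite eqEdim Z'W dimW' k0 addn0 leqnn.
    by rewrite ZeW.
  case: hk => [hk|hk].
    by move: hk kn0; rewrite ltnS leqn0 => /eqP ->; rewrite eqxx.
  by move=> x xZ'; apply: (subvP ZZ'); apply: hk; apply: (subvP Z'W).
have hk' : (k <= 1)%N \/ (forall x, x \in W -> Q x \in Z').
  case: hk => [h|h]; [left; exact: ltnW h | right => x xW].
  by apply: (subvP ZZ'); apply: h.
exact: IH Z'W dimW' QZ' hk' fr' (le_trans qs q').
Qed.

Lemma chain (W : nat -> {vspace V}) p Q : islin Q -> W p = 0%VS ->
  (forall i, (i <= p)%N -> (W i <= m)%VS) ->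
  (forall i, (i < p)%N -> (W i.+1 <= W i)%VS) ->
  (forall i, (i <= p)%N -> forall x, x \in W i -> Q x \in W i) ->
  (forall i, (i < p)%N -> (\dim (W i) <= (\dim (W i.+1)).+1)%N \/
                          forall x, x \in W i -> Q x \in W i.+1) ->
  exists s, frame ip (W 0%N) s /\ 0 <= qf ip Q s.
Proof.
move=> Ql Wp Wm Wsub WQ Wstep.
suff: forall j, (j <= p)%N -> exists s, frame ip (W (p - j)%N) s /\ 0 <= qf ip Q s.
  by move=> /(_ p (leqnn p)); rewrite subnn.
elim=> [|j IH] jp.
  exists [::]; rewrite subn0 Wp; split; last by rewrite /qf big_nil.
  split => // y; rewrite memv0 => /eqP ->; by rewrite /expand big_nil.
have jp' : (j <= p)%N by apply: ltnW.
have [s [fs qs]] := IH jp'.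
set i := (p - j.+1)%N.
have ei : i.+1 = (p - j)%N by rewrite /i; lia.
have ip' : (i < p)%N by rewrite /i; lia.
have sub := Wsub i ip'.
have := dimvS sub => dle.
apply: (@grow (W i) Q (Wm i (ltnW ip')) Ql (WQ i (ltnW ip'))
          (\dim (W i) - \dim (W i.+1))%N (W i.+1) s sub).
- by rewrite subnKC.
- by apply: WQ; lia.
- case: (Wstep i ip') => h; [left | by right].
  by rewrite leq_subLR addn1.
- by rewrite ei.
- by [].
Qed.

End Chain.


Lemma sym_eig (R : realType) k (M : 'M[R]_k.+1) : M^T = M ->
  exists mu, exists2 v : 'rV_k.+1, v *m M = mu *: v & v != 0.
Proof.
move=> Msym.
pose Mc := map_mx (@real_complex R) M.
have Mcsym : Mc \is symmetricmx.
  apply/is_hermitianmxP; rewrite expr0 scale1r.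
  apply/matrixP => i j; rewrite !mxE.
  by rewrite -[in LHS]Msym mxE.
have Mcreal : Mc \is a realmx.
  by apply/mxOverP => i j; rewrite mxE; apply/complex_realP; exists (M i j).
have herm := realsym_hermsym Mcsym Mcreal.
have /orthomx_spectralP hP := hermitian_normalmx herm.
have dreal := hermitian_spectral_diag_real herm.
set P := spectralmx Mc in hP.
set d := spectral_diag Mc in hP dreal.
have Pu : P \in unitmx by apply: spectral_unit.
have PM : P *m Mc = diag_mx d *m P.
  by rewrite {1}hP !mulmxA mulmxV // mul1mx.
have eigc : eigenvalue Mc (d 0 0).
  apply/eigenvalueP; exists (row 0 P).
    rewrite -row_mul PM; apply/rowP => j; rewrite !mxE.
    rewrite (bigD1 0) //= big1 ?addr0; first by rewrite mxE eqxx mulr1n.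
    by move=> i /negPf ni; rewrite mxE eq_sym ni mulr0n mul0r.
  apply/eqP => r0.
  have : row 0 (P *m invmx P) = 0 by rewrite row_mul r0 mul0mx.
  rewrite mulmxV // => /rowP /(_ 0); rewrite !mxE eqxx /= => /eqP.
  by rewrite oner_eq0.
have /complex_realP [a ha] : d 0 0 \is Num.real by apply: (mxOverP dreal).
exists a.
apply/eigenvalueP.
have : root (char_poly Mc) (d 0 0) by rewrite -eigenvalue_root_char.
by rewrite ha -map_char_poly fmorph_root -eigenvalue_root_char.
Qed.

Section Eig.
Variables (R : realType) (V : vectType R) (m : {vspace V}) (ip : V -> V -> R).
Hypothesis Hip : inner_product_on m ip.

Definition orthon (s : seq V) := forall i j, (i < size s)%N -> (j < size s)%N ->
  ip (nth 0 s i) (nth 0 s j) = (i == j)%:R.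

Definition eigP (B : V -> V -> R) (W : {vspace V}) (s : seq (V * R)) :=
  [/\ forall p, p \in s -> p.1 \in W,
      forall p, p \in s -> forall y, y \in W -> B p.1 y = p.2 * ip p.1 y,
      orthon (map fst s) & frame ip W (map fst s)].

Lemma eig_frame_gen (B : V -> V -> R) : bilinear_form B -> symmetric_on m B ->
  (forall W : {vspace V}, (W <= m)%VS -> (0 < \dim W)%N ->
     exists x, [/\ x \in W, ip x x = 1 & exists mu, forall y, y \in W -> B x y = mu * ip x y]) ->
  forall W : {vspace V}, (W <= m)%VS -> exists s, eigP B W s.
Proof.
move=> [Bl Br] Bs P1 W.
have [n] := ubnP (\dim W); elim: n W => [//|n IH] W dW Wm.
have [d0|dpos] := eqVneq (\dim W) 0%N.
  exists [::]; split => //.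
  have /eqP W0 : W == 0%VS by rewrite -dimv_eq0 d0.
  split=> // y; rewrite W0 memv0 => /eqP ->.
  by rewrite /expand big_nil.
have [x [xW xx [mu hmu]]] := P1 W Wm (eq_ind _ is_true dpos _ (esym (lt0n _))).
have xm : x \in m by apply: (subvP Wm).
pose pif := fun y => y - ip y x *: x.
have pil : forall (a : R) u v, pif (a *: u + v) = a *: pif u + pif v.
  move=> a u v; rewrite /pif (ip_l Hip) scalerDl scalerBr -scalerA.
  by rewrite opprD addrACA.
have [pi piE] := lin_end pil.
set W' := (pi @: W)%VS.
have W'W : (W' <= W)%VS.
  by apply/subvP => w /memv_imgP [u uW ->]; rewrite piE /pif memvB // memvZ.
have W'm : (W' <= m)%VS by apply: subv_trans W'W Wm.
have W'x : forall w, w \in W' -> ip w x = 0.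
  move=> w /memv_imgP [u uW ->]; rewrite piE /pif (ipBl Hip) (ipZl Hip) xx.
  by rewrite mulr1 subrr.
have W'x' : forall w, w \in W' -> ip x w = 0.
  by move=> w wW'; rewrite (ip_sym Hip) ?W'x // (subvP W'm).
have dW' : (\dim W' < n)%N.
  have : (\dim W' < \dim W)%N.
    rewrite ltn_neqAle dimvS // andbT.
    apply/negP => /eqP h.
    have /eqP hh : W' == W by rewrite eqEdim W'W h leqnn.
    have xW' : x \in W' by rewrite hh.
    by move: (W'x _ xW'); rewrite xx => /eqP; rewrite oner_eq0.
  by move=> h; apply: leq_trans h _; rewrite -ltnS.
have [s' [s'W s'eig s'on [s'mem s'fr]]] := IH W' dW' W'm.
have fx : forall p, p \in s' -> ip x p.1 = 0 by move=> p ps; apply: W'x'; apply: s'W.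
have yd : forall y, y \in W -> y = ip y x *: x + pi y by move=> y _; rewrite piE /pif addrC subrK.
have piW : forall y, y \in W -> pi y \in W' by move=> y yW; apply: memv_img.
exists ((x, mu) :: s'); split.
- move=> p; rewrite inE => /orP [/eqP -> //|ps]; apply: (subvP W'W); exact: s'W.
- move=> p; rewrite inE => /orP [/eqP -> //|ps] y yW.
  have p1m : p.1 \in m by apply: (subvP W'm); apply: s'W.
  rewrite (yd y yW) Br (ip_r Hip) (s'eig p ps (pi y) (piW y yW)).
  rewrite (Bs _ _ p1m xm) hmu; last by apply: (subvP W'W); apply: s'W.
  by rewrite (ip_sym Hip p1m xm) fx // !mulr0 !add0r.
- have nthW : forall j, (j < size (map fst s'))%N -> nth 0 (map fst s') j \in W'.
    by move=> j hj; apply: s'mem; apply: mem_nth.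
  move=> [|i] [|j] /= hi hj.
  + by rewrite xx.
  + by rewrite W'x' ?nthW.
  + by rewrite W'x ?nthW.
  + by rewrite s'on.
- split.
    move=> v; rewrite /= inE => /orP [/eqP -> //|vs].
    by apply: (subvP W'W); apply: s'mem.
  move=> y yW; rewrite /expand /= big_cons -/(expand ip _ _).
  rewrite {1}(yd y yW); congr (_ + _).
  have ex0 : expand ip (map fst s') x = 0.
    rewrite /expand big_map big_seq big1 // => p ps.
    by rewrite fx // scale0r.
  have -> : expand ip (map fst s') y = expand ip (map fst s') (pi y).
    by rewrite {1}(yd y yW) (expand_lin Hip) ex0 scaler0 add0r.
  by apply: s'fr; apply: piW.
Qed.

End Eig.


Section Eig2.
Variables (R : realType) (V : vectType R) (m : {vspace V}) (ip : V -> V -> R).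
Hypothesis Hip : inner_product_on m ip.

Lemma normalize x : x \in m -> x != 0 ->
  ip ((Num.sqrt (ip x x))^-1 *: x) ((Num.sqrt (ip x x))^-1 *: x) = 1.
Proof.
move=> xm xn0; have p := ip_pos Hip xm xn0.
rewrite (ipZl Hip) (ipZr Hip) mulrA -expr2 exprVn sqr_sqrtr ?mulVf //.
  by rewrite gt_eqF.
by rewrite ltW.
Qed.

Lemma P1ip (W : {vspace V}) : (W <= m)%VS -> (0 < \dim W)%N ->
  exists x, [/\ x \in W, ip x x = 1 & exists mu, forall y, y \in W -> ip x y = mu * ip x y].
Proof.
move=> Wm dW; set x0 := vpick W.
have x0n : x0 != 0 by rewrite vpick0 -dimv_eq0 -lt0n.
have x0W : x0 \in W by apply: memv_pick.
exists ((Num.sqrt (ip x0 x0))^-1 *: x0); split.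
- by rewrite memvZ.
- by apply: normalize => //; apply: (subvP Wm).
- by exists 1 => y _; rewrite mul1r.
Qed.

Lemma ip_bil : bilinear_form ip.
Proof. by case: Hip. Qed.
Lemma ip_symm : symmetric_on m ip.
Proof. by case: Hip. Qed.

Lemma onb_exists (W : {vspace V}) : (W <= m)%VS ->
  exists f, [/\ orthon ip f, forall v, v \in f -> v \in W & frame ip W f].
Proof.
move=> Wm; have [s [_ _ son [smem sfr]]] := eig_frame_gen Hip ip_bil ip_symm P1ip Wm.
by exists (map fst s).
Qed.

Lemma sum_seq_ord (f : seq V) (F : V -> V) :
  \sum_(z <- f) F z = \sum_(i < size f) F (nth 0 f i).
Proof. by rewrite (big_nth 0) big_mkord. Qed.

Lemma P1B (B : V -> V -> R) : bilinear_form B -> symmetric_on m B ->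
  forall W : {vspace V}, (W <= m)%VS -> (0 < \dim W)%N ->
  exists x, [/\ x \in W, ip x x = 1 & exists mu, forall y, y \in W -> B x y = mu * ip x y].
Proof.
move=> [Bl Br] Bs W Wm dW.
have [f [fon fW [_ ffr]]] := onb_exists Wm.
have fm : forall i, nth 0 f i \in m.
  move=> i; have [hi|hi] := ltnP i (size f).
    by apply: (subvP Wm); apply: fW; apply: mem_nth.
  by rewrite nth_default // mem0v.
have fn : (0 < size f)%N.
  rewrite lt0n; apply/negP => /eqP /size0nil f0.
  have y0 : vpick W != 0 by rewrite vpick0 -dimv_eq0 -lt0n.
  have := ffr _ (memv_pick W); rewrite f0 /expand big_nil => h.
  by rewrite h eqxx in y0.
set k := (size f).-1; have hk : size f = k.+1 by rewrite /k prednK.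
pose M : 'M[R]_k.+1 := \matrix_(i, j) B (nth 0 f i) (nth 0 f j).
have Msym : M^T = M by apply/matrixP => i j; rewrite !mxE Bs ?fm.
have [mu [v hv vn0]] := sym_eig Msym.
pose x := \sum_(i < k.+1) v 0 i *: nth 0 f i.
have xW : x \in W.
  apply: memv_suml => i _; apply: memvZ; apply: fW; apply: mem_nth.
  by rewrite hk.
have ipxf : forall j : 'I_k.+1, ip x (nth 0 f j) = v 0 j.
  move=> j; rewrite (ip_suml Hip) (bigD1 j) //= big1 ?addr0.
    by rewrite (ipZl Hip) fon ?hk // eqxx mulr1.
  move=> i ij; rewrite (ipZl Hip) fon ?hk //.
  by case: eqP => [/val_inj e|]; [rewrite e eqxx in ij | rewrite mulr0].
have Bxf : forall j : 'I_k.+1, B x (nth 0 f j) = mu * v 0 j.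
  move=> j; have hl : forall (a : R) u w, (fun z => B z (nth 0 f j)) (a *: u + w)
      = a * B u (nth 0 f j) + B w (nth 0 f j) by move=> a u w /=; rewrite Bl.
  rewrite (lin_sum hl) /=.
  have := congr1 (fun A : 'rV[R]_k.+1 => A 0 j) hv; rewrite !mxE => <-.
  by apply: eq_bigr => i _; rewrite (linZ hl) mxE.
have hexp : forall y, y \in W -> y = \sum_(j < k.+1) ip y (nth 0 f j) *: nth 0 f j.
  move=> y yW; rewrite {1}(ffr _ yW) /expand (big_nth 0) big_mkord.
  by rewrite hk.
have xn0 : x != 0.
  apply: contraNneq vn0 => x0; apply/eqP/rowP => j.
  by rewrite mxE -ipxf x0 (ip0l Hip).
have xm : x \in m by apply: (subvP Wm).
exists ((Num.sqrt (ip x x))^-1 *: x); split.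
- by rewrite memvZ.
- by apply: normalize.
exists mu => y yW.
have hBr : forall (a : R) u w, B x (a *: u + w) = a * B x u + B x w by move=> *; rewrite Br.
have hBx : B x y = mu * ip x y.
  rewrite (hexp y yW) (lin_sum hBr) (ip_sumr Hip) mulr_sumr.
  apply: eq_bigr => j _; rewrite (linZ hBr) (ipZr Hip) Bxf ipxf.
  by rewrite mulrCA.
have hl : forall (a : R) u w, (fun z => B z y) (a *: u + w) = a * B u y + B w y.
  by move=> a u w /=; rewrite Bl.
by rewrite (linZ hl) (ipZl Hip) hBx mulrCA.
Qed.

Lemma eig_frame (B : V -> V -> R) : bilinear_form B -> symmetric_on m B ->
  exists s, eigP ip B m s.
Proof.
move=> hB hBs; apply: (eig_frame_gen Hip hB hBs) => //.
exact: P1B.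
Qed.

End Eig2.


Section Basic.
Variables (R : realType) (V : vectType R) (br : V -> V -> V) (h m : {vspace V})
  (ip A : V -> V -> R) (Lam : V -> V -> V).
Hypotheses (HL : lie_bracket br) (HR : reductive_decomposition br h m)
  (Hip : inner_product_on m ip) (HAb : bilinear_form A) (HAs : symmetric_on m A)
  (HLam : levi_civita br h m ip Lam).

Local Notation bm := (brm br h m).

Lemma br_l a x y z : br (a *: x + y) z = a *: br x z + br y z.
Proof. by have [hl _ _ _] := HL; apply: hl. Qed.
Lemma br_r a x y z : br x (a *: y + z) = a *: br x y + br x z.
Proof. by have [_ hr _ _] := HL; apply: hr. Qed.
Lemma br_xx x : br x x = 0.
Proof. by have [_ _ hx _] := HL; apply: hx. Qed.

Lemma br_D1 x y z : br (x + y) z = br x z + br y z.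
Proof. by have := br_l 1 x y z; rewrite !scale1r. Qed.
Lemma br_D2 x y z : br x (y + z) = br x y + br x z.
Proof. by have := br_r 1 x y z; rewrite !scale1r. Qed.

Lemma br_anti x y : br y x = - br x y.
Proof.
have := br_xx (x + y); rewrite br_D1 !br_D2 !br_xx add0r addr0 => /eqP.
by rewrite addr_eq0 => /eqP ->; rewrite opprK.
Qed.

Lemma mpart_mem v : mpart h m v \in m.
Proof. exact: memv_pi. Qed.

Lemma mpart_id v : v \in m -> mpart h m v = v.
Proof.
move=> vm; apply: daddv_pi_id => //; rewrite capvC.
by have [] := HR.
Qed.

Lemma mpart_lin a x y : mpart h m (a *: x + y) = a *: mpart h m x + mpart h m y.
Proof. by rewrite /mpart linearP. Qed.

Lemma mpartN x : mpart h m (- x) = - mpart h m x.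
Proof. by rewrite /mpart linearN. Qed.

Lemma bm_mem x y : bm x y \in m.
Proof. exact: mpart_mem. Qed.

Lemma bm_l a x y z : bm (a *: x + y) z = a *: bm x z + bm y z.
Proof. by rewrite /brm br_l mpart_lin. Qed.
Lemma bm_r a x y z : bm x (a *: y + z) = a *: bm x y + bm x z.
Proof. by rewrite /brm br_r mpart_lin. Qed.
Lemma bm_anti x y : bm y x = - bm x y.
Proof. by rewrite /brm br_anti mpartN. Qed.

Lemma ip_uniq u v : u \in m -> v \in m -> (forall z, z \in m -> ip u z = ip v z) -> u = v.
Proof.
move=> um vm huv; apply/eqP; rewrite -subr_eq0; apply/eqP.
apply: (ip_eq0 Hip); first by rewrite memvB.
by rewrite (ipBl Hip) huv ?subrr // memvB.
Qed.

Lemma Lam_mem x y : x \in m -> y \in m -> Lam x y \in m.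
Proof. by move=> xm ym; case: (HLam xm ym). Qed.

Lemma Lam_ip x y z : x \in m -> y \in m -> z \in m ->
  ip (Lam x y) z = 2^-1 * ip (bm x y) z + 2^-1 * (ip (bm z x) y + ip x (bm z y)).
Proof. by move=> xm ym zm; case: (HLam xm ym) => _ ->. Qed.

Lemma Lam_l a x x' y : x \in m -> x' \in m -> y \in m ->
  Lam (a *: x + x') y = a *: Lam x y + Lam x' y.
Proof.
move=> xm x'm ym; have xx'm : a *: x + x' \in m by rewrite memvD // memvZ.
apply: ip_uniq; rewrite ?Lam_mem // ?memvD ?memvZ ?Lam_mem // => z zm.
rewrite (ip_l Hip) !Lam_ip // bm_l bm_r !(ip_l Hip).
ring.
Qed.

Lemma Lam_r a x y y' : x \in m -> y \in m -> y' \in m ->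
  Lam x (a *: y + y') = a *: Lam x y + Lam x y'.
Proof.
move=> xm ym y'm; have yy'm : a *: y + y' \in m by rewrite memvD // memvZ.
apply: ip_uniq; rewrite ?Lam_mem // ?memvD ?memvZ ?Lam_mem // => z zm.
rewrite (ip_l Hip) !Lam_ip // !bm_r !(ip_l Hip) !(ip_r Hip).
ring.
Qed.

Definition linm (f : V -> R) := forall a x y, x \in m -> y \in m -> f (a *: x + y) = a * f x + f y.

Lemma linm0 f : linm f -> f 0 = 0.
Proof.
move=> hf; have := hf 1 0 0 (mem0v _) (mem0v _); rewrite scaler0 addr0 mul1r => hh.
by apply: (addrI (f 0)); rewrite addr0 -hh.
Qed.

Lemma linm_sum f : linm f -> forall (T : Type) (r : seq T) (F : T -> V),
  (forall i, F i \in m) -> f (\sum_(i <- r) F i) = \sum_(i <- r) f (F i).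
Proof.
move=> hf T r F hF; elim: r => [|i r IH]; first by rewrite !big_nil linm0.
rewrite !big_cons -IH.
have sm : \sum_(j <- r) F j \in m by apply: memv_suml => j _.
by have := hf 1 (F i) _ (hF i) sm; rewrite !scale1r mul1r.
Qed.

Lemma linm_zero f (n : nat) (e : 'I_n -> V) :
  linm f -> (forall i, e i \in m) ->
  (forall y, y \in m -> y = \sum_(i < n) ip y (e i) *: e i) ->
  (forall i, f (e i) = 0) -> forall y, y \in m -> f y = 0.
Proof.
move=> hf em hexp h0 y ym; rewrite (hexp y ym) (linm_sum hf) ?big1 // => [i _|i].
  by rewrite -(addr0 (_ *: _)) hf ?mem0v // h0 mulr0 add0r linm0.
by rewrite memvZ.
Qed.

Lemma A_l a x y z : A (a *: x + y) z = a * A x z + A y z.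
Proof. by have [hl _] := HAb; apply: hl. Qed.
Lemma A_r a x y z : A x (a *: y + z) = a * A x y + A x z.
Proof. by have [_ hr] := HAb; apply: hr. Qed.

Lemma nabla_lin3 x y : x \in m -> y \in m -> linm (fun z => nablaA Lam A x y z).
Proof.
move=> xm ym a z z' zm z'm; rewrite /nablaA Lam_r // A_r A_r.
ring.
Qed.

Lemma nabla_lin2 x z : x \in m -> z \in m -> linm (fun y => nablaA Lam A x y z).
Proof.
move=> xm zm a y y' ym y'm; rewrite /nablaA Lam_r // A_l A_l.
ring.
Qed.

Lemma nabla_lin1 y z : y \in m -> z \in m -> linm (fun x => nablaA Lam A x y z).
Proof.
move=> ym zm a x x' xm x'm; rewrite /nablaA !Lam_l // A_l A_r.
ring.
Qed.

Lemma nabla_zero (n : nat) (e : 'I_n -> V) :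
  (forall i, e i \in m) ->
  (forall y, y \in m -> y = \sum_(i < n) ip y (e i) *: e i) ->
  (forall i j k, nablaA Lam A (e i) (e j) (e k) = 0) ->
  forall x y z, x \in m -> y \in m -> z \in m -> nablaA Lam A x y z = 0.
Proof.
move=> em hexp h0 x y z xm ym zm.
have h1 : forall i j, nablaA Lam A (e i) (e j) z = 0.
  move=> i j; apply: (linm_zero (f := fun z => nablaA Lam A (e i) (e j) z)) => //.
  exact: nabla_lin3.
have h2 : forall i, nablaA Lam A (e i) y z = 0.
  move=> i; apply: (linm_zero (f := fun y => nablaA Lam A (e i) y z)) => //.
  exact: nabla_lin2.
apply: (linm_zero (f := fun x => nablaA Lam A x y z)) => //.
exact: nabla_lin1.
Qed.

End Basic.


Lemma alg3 (R : realType) (x y z a b g : R) : a + b + g = 0 -> b != 0 -> g != 0 ->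
  b * (y + x - z) = a * (x + z - y) -> g * (z + y - x) = a * (x + z - y) ->
  4 * x * z * a ^+ 2 = (a * (x + z - y)) ^+ 2.
Proof.
move=> hs bn gn h2 h3.
have bg : b * g != 0 by rewrite mulf_neq0.
apply: (mulfI bg).
have e1 : b * (2 * x) = (a + b) * (x + z - y).
  have -> : b * (2 * x) = b * (y + x - z) + b * (x + z - y) by ring.
  by rewrite h2; ring.
have e2 : g * (2 * z) = (a + g) * (x + z - y).
  have -> : g * (2 * z) = g * (z + y - x) + g * (x + z - y) by ring.
  by rewrite h3; ring.
have -> : b * g * (4 * x * z * a ^+ 2) = a ^+ 2 * (b * (2 * x)) * (g * (2 * z)) by ring.
rewrite e1 e2.
have -> : a + b = - g by apply/eqP; rewrite -subr_eq0 opprK hs.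
have -> : a + g = - b by apply/eqP; rewrite -subr_eq0 opprK -hs; apply/eqP; ring.
ring.
Qed.


Section Coord.
Variables (R : realType) (V : vectType R) (br : V -> V -> V) (h m : {vspace V})
  (ip A : V -> V -> R) (Lam : V -> V -> V).
Hypotheses (HL : lie_bracket br) (HR : reductive_decomposition br h m)
  (Hip : inner_product_on m ip) (HAb : bilinear_form A) (HAs : symmetric_on m A)
  (HLam : levi_civita br h m ip Lam) (Hcod : codazzi m Lam A).
Variables (n : nat) (e : 'I_n -> V) (mu : 'I_n -> R).
Hypotheses (Hem : forall i, e i \in m)
  (Heig : forall i y, y \in m -> A (e i) y = mu i * ip (e i) y)
  (Hexp : forall y, y \in m -> y = \sum_(i < n) ip y (e i) *: e i).

Local Notation bm := (brm br h m).

Definition cc i j k := ip (bm (e i) (e j)) (e k).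
Definition XX i j k := cc i j k - cc i k j + cc k j i.
Definition TT i j k := nablaA Lam A (e i) (e j) (e k).
Definition tau i j k := (mu j - mu k) * XX i j k.

Let bmA x y : bm y x = - bm x y. Proof. exact: (@bm_anti _ _ br h m HL). Qed.
Let bmM x y : bm x y \in m. Proof. exact: bm_mem. Qed.
Let LamI x y z : x \in m -> y \in m -> z \in m ->
  ip (Lam x y) z = 2^-1 * ip (bm x y) z + 2^-1 * (ip (bm z x) y + ip x (bm z y)).
Proof. exact: (@Lam_ip _ _ br h m ip Lam HLam). Qed.
Let LamM x y : x \in m -> y \in m -> Lam x y \in m.
Proof. exact: (@Lam_mem _ _ br h m ip Lam HLam). Qed.

Lemma ipNl x z : ip (- x) z = - ip x z.
Proof. by rewrite -scaleN1r (ipZl Hip) mulN1r. Qed.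

Lemma cc_anti i j k : cc j i k = - cc i j k.
Proof. by rewrite /cc bmA ipNl. Qed.

Lemma L2 i j k : 2 * ip (Lam (e i) (e j)) (e k) = XX i j k.
Proof.
rewrite LamI // (ip_sym Hip (Hem i) (bmM _ _)).
rewrite /XX -/(cc i j k) -/(cc k j i).
have -> : ip (bm (e k) (e i)) (e j) = - cc i k j by rewrite bmA ipNl.
have h2 : (2 : R) != 0 by rewrite pnatr_eq0.
by rewrite mulrDr !mulrA mulfV // !mul1r addrA.
Qed.

Lemma XXsw i j k : XX i k j = - XX i j k.
Proof. by rewrite /XX (cc_anti k j i); ring. Qed.

Lemma T2 i j k : 2 * TT i j k = tau i j k.
Proof.
have mij := LamM (Hem i) (Hem j); have mik := LamM (Hem i) (Hem k).
rewrite /TT /nablaA (HAs mij (Hem k)) (Heig _ mij) (Heig _ mik).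
rewrite (ip_sym Hip (Hem k) mij) (ip_sym Hip (Hem j) mik).
have -> : 2 * (- (mu k * ip (Lam (e i) (e j)) (e k)) - mu j * ip (Lam (e i) (e k)) (e j))
  = - mu k * (2 * ip (Lam (e i) (e j)) (e k)) - mu j * (2 * ip (Lam (e i) (e k)) (e j)).
  by ring.
by rewrite !L2 (XXsw i j k) /tau; ring.
Qed.

Lemma Tcod i j k : TT i j k = TT j i k.
Proof. by apply: Hcod. Qed.

Lemma tau_cod i j k : tau i j k = tau j i k.
Proof. by rewrite -!T2 Tcod. Qed.

Lemma tau_sw i j k : tau i k j = tau i j k.
Proof. by rewrite /tau XXsw; ring. Qed.

Lemma fact1 i j k : mu i = mu j -> mu j != mu k ->
  cc i j k = 0 /\ cc k i j + cc k j i = 0.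
Proof.
move=> eij njk.
have nik : mu i - mu k != 0 by rewrite subr_eq0 eij.
have njk' : mu j - mu k != 0 by rewrite subr_eq0.
have t0 : tau k i j = 0 by rewrite /tau eij subrr mul0r.
have h1 : XX i j k = 0.
  have : tau i j k = 0 by rewrite -tau_sw tau_cod.
  by rewrite /tau => /eqP; rewrite mulf_eq0 (negPf njk') /= => /eqP.
have h2 : XX j i k = 0.
  have : tau j i k = 0 by rewrite -tau_cod -tau_sw tau_cod.
  by rewrite /tau => /eqP; rewrite mulf_eq0 (negPf nik) /= => /eqP.
move: h1 h2; rewrite /XX (cc_anti i j k) (cc_anti j k i) (cc_anti i k j).
move=> h1 h2; split.
  have : 2 * cc i j k = 0.
    by rewrite -[RHS](subrr (0 : R)) -{1}h1 -{1}h2; ring.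
  by move/eqP; rewrite mulf_eq0 pnatr_eq0 /= => /eqP.
have : 2 * (cc k i j + cc k j i) = 0.
  by rewrite (cc_anti i k j) (cc_anti j k i) -[RHS](addr0 (0 : R)) -{1}h1 -{1}h2; ring.
by move/eqP; rewrite mulf_eq0 pnatr_eq0 /= (cc_anti i k j) (cc_anti j k i) => /eqP.
Qed.

Lemma fact3 i j k : mu i != mu j -> mu j != mu k -> mu i != mu k ->
  4 * (cc i j k * cc i k j) * (mu j - mu k) ^+ 2 = - (tau i j k) ^+ 2.
Proof.
move=> nij njk nik.
have e1 : XX i j k = cc i j k + cc k i j - cc j k i.
  by rewrite /XX (cc_anti k i j) (cc_anti j k i); ring.
have e2 : XX j k i = cc j k i + cc i j k - cc k i j.
  by rewrite /XX (cc_anti i j k) (cc_anti k i j); ring.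
have e3 : XX k i j = cc k i j + cc j k i - cc i j k.
  by rewrite /XX (cc_anti j k i) (cc_anti i j k); ring.
have t2 : tau j k i = tau i j k by rewrite tau_sw -tau_cod.
have t3 : tau k i j = tau i j k by rewrite -tau_cod tau_sw.
move: t2 t3; rewrite /tau e1 e2 e3 => t2 t3.
have hs : (mu j - mu k) + (mu k - mu i) + (mu i - mu j) = 0 by ring.
have bn : mu k - mu i != 0 by rewrite subr_eq0 eq_sym.
have gn : mu i - mu j != 0 by rewrite subr_eq0.
have H := alg3 hs bn gn t2 t3.
rewrite (cc_anti k i j) mulrN -H.
by ring.
Qed.

Lemma tau0 i j k : (mu i == mu j) || (mu j == mu k) || (mu i == mu k) -> tau i j k = 0.
Proof.
case/orP => [/orP [/eqP eij|/eqP ejk]|/eqP eik].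
- by rewrite -tau_sw tau_cod /tau eij subrr mul0r.
- by rewrite /tau ejk subrr mul0r.
- by rewrite tau_cod /tau eik subrr mul0r.
Qed.

Lemma TT_tau i j k : tau i j k = 0 -> TT i j k = 0.
Proof.
rewrite -T2 => /eqP; rewrite mulf_eq0 pnatr_eq0 /= => /eqP //.
Qed.

Lemma ortho i j : mu i != mu j -> ip (e i) (e j) = 0.
Proof.
move=> nij; have := HAs (Hem i) (Hem j).
rewrite !Heig ?Hem // (ip_sym Hip (Hem j) (Hem i)) => /eqP.
rewrite -subr_eq0 -mulrBl mulf_eq0 subr_eq0 (negPf nij) /= => /eqP //.
Qed.

End Coord.


Lemma vlinB (R : realType) (V : vectType R) (f : V -> V) : islin f ->
  forall x y, f (x - y) = f x - f y.
Proof.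
move=> hf x y; rewrite (vlinD hf) -scaleN1r (vlinZ hf) scaleN1r //.
Qed.

Section Final.
Variables (R : realType) (V : vectType R) (br : V -> V -> V) (h m : {vspace V})
  (ip A : V -> V -> R) (Lam : V -> V -> V).
Hypotheses (HL : lie_bracket br) (HR : reductive_decomposition br h m)
  (Hip : inner_product_on m ip) (HAb : bilinear_form A) (HAs : symmetric_on m A)
  (HLam : levi_civita br h m ip Lam) (Hcod : codazzi m Lam A).
Variables (n : nat) (e : 'I_n -> V) (mu : 'I_n -> R).
Hypotheses (Hem : forall i, e i \in m)
  (Heig : forall i y, y \in m -> A (e i) y = mu i * ip (e i) y)
  (Hexp : forall y, y \in m -> y = \sum_(i < n) ip y (e i) *: e i).

Local Notation bm := (brm br h m).
Local Notation cc := (cc br h m ip e).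
Local Notation ortho := (ortho Hip HAs Hem Heig).

Variable a : 'I_n.

Definition Pf (v : V) := v - \sum_(c < n | mu c == mu a) ip (e c) v *: e c.
Definition Lf (v : V) := bm (e a) v.
Definition Qf (v : V) := Pf (Lf v).
Definition fam := map e (enum [pred i | mu i != mu a]).

Lemma Pf_lin : islin Pf.
Proof.
move=> x u v; rewrite /Pf.
have -> : \sum_(c < n | mu c == mu a) ip (e c) (x *: u + v) *: e c =
   x *: \sum_(c < n | mu c == mu a) ip (e c) u *: e c +
   \sum_(c < n | mu c == mu a) ip (e c) v *: e c.
  rewrite scaler_sumr -big_split /=; apply: eq_bigr => c _.
  by rewrite (ip_r Hip) scalerDl scalerA.
by rewrite scalerBr opprD addrACA.
Qed.

Lemma Lf_lin : islin Lf.
Proof. by move=> x u v; rewrite /Lf (bm_r h m HL). Qed.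

Lemma Qf_lin : islin Qf.
Proof. by move=> x u v; rewrite /Qf Lf_lin Pf_lin. Qed.

Lemma Pf_mem v : v \in m -> Pf v \in m.
Proof.
move=> vm; rewrite /Pf memvB //; apply: memv_suml => c _; exact: memvZ.
Qed.

Lemma Pf_K c : mu c = mu a -> Pf (e c) = 0.
Proof.
move=> ca; apply/eqP; rewrite /Pf subr_eq0; apply/eqP.
rewrite {1}(Hexp (Hem c)) (bigID (fun i => mu i == mu a)) /= addrC big1 ?add0r.
  by apply: eq_bigr => i /eqP ia; rewrite (ip_sym Hip (Hem c) (Hem i)).
by move=> i ia; rewrite ortho ?scale0r // ca eq_sym.
Qed.

Lemma Pf_J b : mu b != mu a -> Pf (e b) = e b.
Proof.
move=> ba; rewrite /Pf big1 ?subr0 // => c /eqP ca.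
by rewrite ortho ?scale0r // ca eq_sym.
Qed.

Lemma Lf_K b : mu b = mu a -> Pf (Lf (e b)) = 0.
Proof.
move=> ba; rewrite /Lf (Hexp (bm_mem _ _ _ _ _)) (vlin_sum Pf_lin) big1 // => d _.
rewrite (vlinZ Pf_lin); have [da|da] := eqVneq (mu d) (mu a).
  by rewrite Pf_K // scaler0.
have bd : mu b != mu d by rewrite ba eq_sym.
have [h0 _] := fact1 HL Hip HAs HLam Hcod Hem Heig (esym ba) bd.
unfold ProofAux.cc in h0.
by rewrite h0 scale0r.
Qed.

Lemma QP u : u \in m -> Qf (Pf u) = Pf (Lf u).
Proof.
move=> um; rewrite /Qf [X in Lf X]/Pf (vlinB Lf_lin) (vlinB Pf_lin) (vlin_sum Lf_lin).
rewrite (vlin_sum Pf_lin) big1 ?subr0 // => c /eqP ca.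
by rewrite (vlinZ Lf_lin) (vlinZ Pf_lin) Lf_K ?scaler0.
Qed.

Lemma ipPf v d : mu d != mu a -> ip (Pf v) (e d) = ip v (e d).
Proof.
move=> da; rewrite /Pf (ipBl Hip) (ip_suml Hip) big1 ?subr0 // => c /eqP ca.
by rewrite (ipZl Hip) ortho ?mulr0 // ca eq_sym.
Qed.

Lemma sum_fam (M : nmodType) (F : V -> M) :
  \sum_(x <- fam) F x = \sum_(b | mu b != mu a) F (e b).
Proof. by rewrite /fam big_map big_enum_cond /=; apply: eq_bigl => b; rewrite inE andbT. Qed.

Definition qsum := \sum_(b | mu b != mu a) \sum_(d | mu d != mu a) cc a b d * cc a d b.

Lemma Pf_exp u : u \in m -> Pf u = \sum_(b | mu b != mu a) ip u (e b) *: e b.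
Proof.
move=> um; rewrite /Pf.
have -> : \sum_(c < n | mu c == mu a) ip (e c) u *: e c =
   \sum_(i < n | mu i == mu a) ip u (e i) *: e i.
  by apply: eq_bigr => c _; rewrite (ip_sym Hip (Hem c) um).
by rewrite {1}(Hexp um) (bigID (fun i => mu i == mu a)) /= addrC addrK.
Qed.

Section WithEnd.
Variables (Pl : 'End(V)).
Hypothesis PlE : forall v, Pl v = Pf v.

Local Notation U := (Pl @: m)%VS.

Lemma U_m : (U <= m)%VS.
Proof. by apply/subvP => y /memv_imgP [u um ->]; rewrite PlE Pf_mem. Qed.

Lemma U_frame : frame ip U fam.
Proof.
split.
  move=> x /mapP [b]; rewrite mem_enum inE => ba ->.
  by rewrite -(Pf_J ba) -PlE memv_img.
move=> y /memv_imgP [u um ->]; rewrite PlE /expand sum_fam [LHS](Pf_exp um).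
by apply: eq_bigr => b ba; rewrite ipPf.
Qed.

Lemma QU y : y \in U -> Qf y \in U.
Proof.
move=> /memv_imgP [u um ->]; rewrite PlE QP // -PlE memv_img //.
exact: bm_mem.
Qed.

Lemma q_fam : qf ip Qf fam = qsum.
Proof.
rewrite /qf sum_fam; apply: eq_bigr => b ba; rewrite sum_fam; apply: eq_bigr => d da.
by rewrite /Qf !ipPf.
Qed.

Lemma QQ_lin : islin (fun x => Qf (Qf x)).
Proof. by move=> x u v; rewrite !Qf_lin. Qed.

Lemma qnonneg : (exists s, frame ip U s /\ 0 <= qf ip Qf s) -> 0 <= qsum.
Proof.
move=> [s [fs qs]]; rewrite -q_fam.
rewrite (qf_trace Hip U_m U_frame Qf_lin QU).
rewrite (trace_inv Hip U_m U_frame fs QQ_lin).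
by rewrite -(qf_trace Hip U_m fs Qf_lin QU).
Qed.

Lemma split_q : split_solvable_alg m bm -> 0 <= qsum.
Proof.
move=> [p [aa [a0 ap hstep hid]]].
apply: qnonneg.
pose W i := (Pl @: aa i)%VS.
have am : forall i, (i <= p)%N -> (aa i <= m)%VS.
  by move=> i hi; have [h1 _ _ _] := hid i hi; apply/subvP => x /h1.
have := @chain _ _ _ _ Hip W p Qf Qf_lin.
rewrite /W a0; apply.
- by rewrite ap limg0.
- move=> i hi; apply/subvP => y /memv_imgP [u ua ->]; rewrite PlE Pf_mem //.
  exact: (subvP (am i hi)).
- by move=> i hi; apply: limgS; have [] := hstep i hi.
- move=> i hi y /memv_imgP [u ua ->].
  have um : u \in m by apply: (subvP (am i hi)).
  rewrite PlE QP // -PlE memv_img //.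
  have [_ _ _ h4] := hid i hi.
  by have [] := h4 (e a) u (Hem a) ua.
- move=> i hi; left.
  have [sub dd] := hstep i hi.
  have /subvPn [x0 x0a nx] : ~~ (aa i <= aa i.+1)%VS.
    apply/negP => /dimvS; rewrite dd => hh.
    by have := leq_ltn_trans hh (ltnSn _); rewrite ltnn.
  have eq1 : aa i = (aa i.+1 + <[x0]>)%VS.
    apply/eqP; rewrite eq_sym eqEdim subv_add sub -memvE x0a /=.
    by rewrite dim_add_line // dd.
  rewrite eq1 limgD limg_line.
  apply: leq_trans (dimv_add_leqif _ _).1 _.
  by rewrite dim_vline; case: (_ != 0); rewrite ?addn1 ?addn0 // leqnSn.
Qed.

Section WithQ.
Variable Ql : 'End(V).
Hypothesis QlE : forall v, Ql v = Qf v.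

Lemma iter_m j u : u \in m -> iter j Lf u \in m.
Proof. by case: j => [//|j] _; rewrite iterS; apply: bm_mem. Qed.

Lemma iprod j u : u \in m -> is_product m bm j.+1 (iter j Lf u).
Proof.
elim: j u => [|j IH] u um; first exact: prod_one.
have := prod_mul (prod_one bm (Hem a)) (IH u um).
by rewrite add1n iterS.
Qed.

Lemma nil_q : nilpotent_alg m bm -> 0 <= qsum.
Proof.
move=> [t [t0 ht]].
apply: qnonneg.
pose W j := iter j (fun X => (Ql @: X)%VS) U.
have WS : forall j, (W j.+1 <= W j)%VS.
  elim=> [|j IH].
    apply/subvP => y /memv_imgP [u uU ->]; rewrite QlE; exact: QU.
  by rewrite /W !iterS; apply: limgS.
have WU : forall j, (W j <= U)%VS.
  elim=> [|j IH]; first exact: subvv.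
  exact: subv_trans (WS j) IH.
have Wform : forall j y, y \in W j -> exists u, u \in m /\ y = Pf (iter j Lf u).
  elim=> [|j IH] y.
    by move=> /memv_imgP [u um ->]; exists u; rewrite PlE.
  rewrite /W iterS -/(W j) => /memv_imgP [y' y'W ->].
  have [u [um ->]] := IH y' y'W.
  by exists u; split => //; rewrite QlE QP ?iter_m // iterS.
set p := t.-1.
have tp : t = p.+1 by rewrite /p prednK.
have Wp : W p = 0%VS.
  apply/eqP; rewrite -subv0; apply/subvP => y /Wform [u [um ->]].
  have -> : iter p Lf u = 0 by apply: ht; rewrite tp; apply: iprod.
  by rewrite memv0 (vlin0 Pf_lin).
have := @chain _ _ _ _ Hip W p Qf Qf_lin Wp.
apply.
- by move=> i _; apply: subv_trans (WU i) U_m.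
- by move=> i _; apply: WS.
- move=> i _ y yW; apply: (subvP (WS i)); rewrite -QlE /W iterS memv_img //.
- move=> i _; right => y yW; rewrite -QlE /W iterS memv_img //.
Qed.

End WithQ.

End WithEnd.

End Final.


Section Fin2.
Variables (R : realType) (V : vectType R) (br : V -> V -> V) (h m : {vspace V})
  (ip A : V -> V -> R) (Lam : V -> V -> V).
Hypotheses (HL : lie_bracket br) (HR : reductive_decomposition br h m)
  (Hip : inner_product_on m ip) (HAb : bilinear_form A) (HAs : symmetric_on m A)
  (HLam : levi_civita br h m ip Lam) (Hcod : codazzi m Lam A).
Variables (n : nat) (e : 'I_n -> V) (mu : 'I_n -> R).
Hypotheses (Hem : forall i, e i \in m)
  (Heig : forall i y, y \in m -> A (e i) y = mu i * ip (e i) y)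
  (Hexp : forall y, y \in m -> y = \sum_(i < n) ip y (e i) *: e i).

Local Notation bm := (brm br h m).
Local Notation cc := (cc br h m ip e).

Lemma allT0 : (forall a, 0 <= qsum br h m ip e mu a) ->
  forall i j k, TT A Lam e i j k = 0.
Proof.
move=> hq i j k.
case Hd: ((mu i == mu j) || (mu j == mu k) || (mu i == mu k)).
  by apply: (TT_tau HL Hip HAs HLam Hem Heig); apply: (tau0 HL Hip HAs HLam Hcod Hem Heig).
move/negbT: Hd; rewrite !negb_or => /andP [/andP [nij njk] nik].
pose F b d := cc i b d * cc i d b.
have Fle : forall b d, mu b != mu i -> mu d != mu i -> F b d <= 0.
  move=> b d bi di; have [ebd|nbd] := eqVneq (mu b) (mu d).
    have [_ h2] := fact1 HL Hip HAs HLam Hcod Hem Heig ebd di.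
    rewrite /F; have -> : cc i d b = - cc i b d by apply/eqP; rewrite -addr_eq0 addrC h2.
    by rewrite mulrN oppr_le0 -expr2 sqr_ge0.
  rewrite eq_sym in bi; rewrite eq_sym in di.
  have h3 := fact3 HL Hip HAs HLam Hcod Hem Heig bi nbd di.
  have d2 : 0 < 4 * (mu b - mu d) ^+ 2.
    by rewrite mulr_gt0 ?ltr0n // lt_def sqr_ge0 andbT sqrf_eq0 subr_eq0.
  rewrite -(pmulr_rle0 _ d2).
  have -> : 4 * (mu b - mu d) ^+ 2 * F b d = 4 * (cc i b d * cc i d b) * (mu b - mu d) ^+ 2.
    by rewrite /F; ring.
  by rewrite h3 oppr_le0 sqr_ge0.
have Hs : \sum_(b | mu b != mu i) \sum_(d | mu d != mu i) - F b d = 0.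
  apply/eqP; rewrite eq_le; apply/andP; split.
    have -> : \sum_(b | mu b != mu i) \sum_(d | mu d != mu i) - F b d = - qsum br h m ip e mu i.
      rewrite /qsum -sumrN; apply: eq_bigr => b _; by rewrite -sumrN.
    by rewrite oppr_le0.
  apply: sumr_ge0 => b bi; apply: sumr_ge0 => d di; rewrite oppr_ge0; exact: Fle.
have G0 := psumr_eq0P (fun b bi => sumr_ge0 _ (fun d di => (eq_ind _ is_true (Fle b d bi di) _ (esym (oppr_ge0 _))))) Hs.
have ji : mu j != mu i by rewrite eq_sym.
have ki : mu k != mu i by rewrite eq_sym.
have Fjk : - F j k = 0.
  apply: (psumr_eq0P _ (G0 j ji)) => // d di; rewrite oppr_ge0; exact: Fle.
have h3 := fact3 HL Hip HAs HLam Hcod Hem Heig nij njk nik.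
move: Fjk; rewrite /F => /eqP; rewrite oppr_eq0 => /eqP hF.
move: h3; rewrite hF mulr0 mul0r => /eqP; rewrite eq_sym oppr_eq0 sqrf_eq0 => /eqP ht.
exact: (TT_tau HL Hip HAs HLam Hem Heig ht).
Qed.

End Fin2.


End ProofAux.
Import ProofAux.
Unset Implicit Arguments.

Theorem proposition2p3 (R : realType) (V : vectType R)
  (br : V -> V -> V) (h m : {vspace V})
  (ip A : V -> V -> R) (Lam : V -> V -> V) :
  lie_bracket br ->
  reductive_decomposition br h m ->
  inner_product_on m ip -> ad_h_invariant br h m ip ->
  bilinear_form A -> symmetric_on m A -> ad_h_invariant br h m A ->
  levi_civita br h m ip Lam ->
  codazzi m Lam A ->
  essential m (brm br h m) ip Lam A ->
  ~ nilpotent_alg m (brm br h m) /\ ~ split_solvable_alg m (brm br h m).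
Proof.
move=> HL HR Hip _ HAb HAs _ HLam Hcod [[x [y [z [xm ym zm nz]]]] _].
have [s [sm seig _ [_ sfr]]] := eig_frame Hip HAb HAs.
pose n := size s.
pose e := fun i : 'I_n => (nth (0, 0) s i).1.
pose mu := fun i : 'I_n => (nth (0, 0) s i).2.
have Hem : forall i, e i \in m by move=> i; apply: sm; apply: mem_nth.
have Heig : forall i y, y \in m -> A (e i) y = mu i * ip (e i) y.
  by move=> i y' ym'; apply: seig => //; apply: mem_nth.
have Hexp : forall y, y \in m -> y = \sum_(i < n) ip y (e i) *: e i.
  move=> y' ym'; rewrite {1}(sfr _ ym') /expand big_map (big_nth (0, 0)) big_mkord.
  by [].
have key : (forall a, 0 <= qsum br h m ip e mu a) -> False.
  move=> hq.
  have T0 := allT0 HL Hip HAs HLam Hcod Hem Heig hq.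
  have := nabla_zero HL Hip HAb HLam Hem Hexp T0 xm ym zm.
  by move/eqP; rewrite (negPf nz).
split.
- move=> Hn; apply: key => a.
  have [Pl PlE] := lin_end (@Pf_lin R V m ip Hip n e mu a).
  have [Ql QlE] := lin_end (@Qf_lin R V br h m ip HL Hip n e mu a).
  exact: (@nil_q R V br h m ip A Lam HL Hip HAs HLam Hcod n e mu Hem Heig Hexp a Pl PlE Ql QlE Hn).
- move=> Hs; apply: key => a.
  have [Pl PlE] := lin_end (@Pf_lin R V m ip Hip n e mu a).
  exact: (@split_q R V br h m ip A Lam HL Hip HAs HLam Hcod n e mu Hem Heig Hexp a Pl PlE Hs).
Qed.
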